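(* Consider the controlled SEIR system described in the context. The set $$\mathbb{X}_f:=\Big\{(S,E,I)\in\Pi:\ S\le \tfrac{\gamma_{\mathrm{nom}}}{\beta_{\mathrm{nom}}},\ I\le I_{\max},\ E\le \tfrac{\gamma_{\mathrm{nom}}}{\eta}I_{\max}\Big\}\cup\mathcal{E}$$ is contained in $\mathcal{M}$. Moreover, for every $x_0\in\mathbb{X}_f$ and every $u\in\mathcal{U}$, the compartments $E$ and $I$ of $x(\cdot;x_0,u)$ decay exponentially, i.e., there exist constants $c\ge0$ and $\lambda>0$ with $E(t)+I(t)\le c\,e^{-\lambda t}$ for all $t\ge 0$.
   Context: Fix parameters $\eta>0$, $0<\beta_{\min}\le\beta_{\mathrm{nom}}$, $0<\gamma_{\mathrm{nom}}\le\gamma_{\max}<\infty$ and $I_{\max}\in(0,1)$. Let $U:=[\beta_{\min},\beta_{\mathrm{nom}}]\times[\gamma_{\mathrm{nom}},\gamma_{\max}]$ and let $\mathcal{U}$ be the set of measurable, locally integrable functions $u=(\beta,\gamma):[0,\infty)\to U$. Let $\Pi:=\{(S,E,I)\in[0,1]^3: S+E+I\le 1\}$. For $x_0\in\Pi$ and $u\in\mathcal{U}$, $x(\cdot;x_0,u)=(S,E,I)$ denotes the unique solution of $\dot S=-\beta(t)SI$, $\dot E=\beta(t)SI-\eta E$, $\dot I=\eta E-\gamma(t)I$ with $x(0)=x_0$; it stays in $\Pi$. Let $G_\Pi:=\{(S,E,I)\in\Pi: I\le I_{\max}\}$ and $\mathcal{M}:=\{x_0\in G_\Pi: x(t;x_0,u)\in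 G_\Pi\ \forall t\ge0,\ \forall u\in\mathcal{U}\}$ (maximal robust positively invariant set). The set of disease-free equilibria is $\mathcal{E}:=\{(S,0,0): S\in[0,1]\}$. *)

(* Defs.v *)
From HB Require Import structures.
From mathcomp Require Import all_boot all_order all_algebra.
From mathcomp Require Import all_classical all_reals all_analysis.
Set Implicit Arguments. Unset Strict Implicit. Unset Printing Implicit Defensive.
Import Order.TTheory GRing.Theory Num.Theory.
Local Open Scope classical_set_scope.
Local Open Scope ring_scope.

Section SEIR.
Variable R : realType.

Definition Sc (x : R * R * R) : R := x.1.1.
Definition Ec (x : R * R * R) : R := x.1.2.
Definition Ic (x : R * R * R) : R := x.2.

Definition Pi (x : R * R * R) : Prop :=
  [/\ 0 <= Sc x <= 1, 0 <= Ec x <= 1, 0 <= Ic x <= 1 & Sc x + Ec x + Ic x <= 1].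

Definition GPi (Imax : R) (x : R * R * R) : Prop := Pi x /\ Ic x <= Imax.

Definition DFE (x : R * R * R) : Prop := 0 <= Sc x <= 1 /\ Ec x = 0 /\ Ic x = 0.

(* admissible controls u = (beta, gamma) : [0,oo) -> U, measurable
   (bounded, hence locally integrable) *)
Definition admissible (bmin bnom gnom gmax : R) (u : R -> R * R) : Prop :=
  [/\ measurable_fun (`[0%R, +oo[ : set R) (fun t => (u t).1),
      measurable_fun (`[0%R, +oo[ : set R) (fun t => (u t).2) &
      forall t, 0 <= t -> bmin <= (u t).1 <= bnom /\ gnom <= (u t).2 <= gmax].

Definition fS (u : R -> R * R) (x : R -> R * R * R) (s : R) : R :=
  - ((u s).1 * Sc (x s) * Ic (x s)).
Definition fE (eta : R) (u : R -> R * R) (x : R -> R * R * R) (s : R) : R :=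
  (u s).1 * Sc (x s) * Ic (x s) - eta * Ec (x s).
Definition fI (eta : R) (u : R -> R * R) (x : R -> R * R * R) (s : R) : R :=
  eta * Ec (x s) - (u s).2 * Ic (x s).

(* x is a (Caratheodory) solution on [0,oo) with x(0) = x0, i.e. it
   satisfies the integral form of the ODE with locally integrable
   right-hand side. *)
Definition is_solution (eta : R) (u : R -> R * R) (x0 : R * R * R)
    (x : R -> R * R * R) : Prop :=
  forall t, 0 <= t ->
    (@lebesgue_measure R).-integrable (`[0%R, t] : set R) (EFin \o fS u x) /\
    (@lebesgue_measure R).-integrable (`[0%R, t] : set R) (EFin \o fE eta u x) /\
    (@lebesgue_measure R).-integrable (`[0%R, t] : set R) (EFin \o fI eta u x) /\
    Sc (x t) = Sc x0 + Rintegral (@lebesgue_measure R) (`[0%R, t] : set R) (fS u x) /\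
    Ec (x t) = Ec x0 + Rintegral (@lebesgue_measure R) (`[0%R, t] : set R) (fE eta u x) /\
    Ic (x t) = Ic x0 + Rintegral (@lebesgue_measure R) (`[0%R, t] : set R) (fI eta u x).

Definition MRPI (eta bmin bnom gnom gmax Imax : R) (x0 : R * R * R) : Prop :=
  GPi Imax x0 /\
  forall u, admissible bmin bnom gnom gmax u ->
  forall x, is_solution eta u x0 x ->
  forall t, 0 <= t -> GPi Imax (x t).

Definition Xf (eta bnom gnom Imax : R) (x : R * R * R) : Prop :=
  (Pi x /\ Sc x <= gnom / bnom /\ Ic x <= Imax /\ Ec x <= gnom / eta * Imax)
  \/ DFE x.

End SEIR.

(* Main.v *)
Require Import Defs.
From HB Require Import structures.
From mathcomp Require Import all_boot all_order all_algebra.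
From mathcomp Require Import all_classical all_reals all_analysis.
From mathcomp Require Import ring lra.
Import Order.TTheory GRing.Theory Num.Theory.
Local Open Scope classical_set_scope.
Local Open Scope ring_scope.

Section RealAux.
Variable R : realType.

Lemma last_nonneg (y : R -> R) (a t L : R) :
  0 <= L -> a <= t -> 0 <= y a -> y t < 0 ->
  (forall r s, a <= r <= t -> a <= s <= t -> `|y r - y s| <= L * `|r - s|) ->
  exists s, [/\ a <= s, s < t, 0 <= y s & forall r, s < r <= t -> y r < 0].
Proof.
move=> L0 at0 ya yt Lip.
pose A := [set r | a <= r <= t /\ 0 <= y r].
have hs : has_sup A.
  split; first by exists a; split => //; rewrite lexx at0.
  by exists t => r [/andP[_ ->]].
have aA : A a by split => //; rewrite lexx at0.
have as_ : a <= sup A by apply: sup_upper_bound.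
have st : sup A <= t by apply: ge_sup; [exists a | move=> r [/andP[_ ->]]].
have ys : 0 <= y (sup A).
  rewrite leNgt; apply/negP => ysn.
  set s := sup A in as_ st ysn *.
  pose e := - y s / (L + 1).
  have e0 : 0 < e by rewrite /e divr_gt0 // ?oppr_gt0 //; lra.
  have eL : (L + 1) * e = - y s by rewrite /e mulrC divfK //; lra.
  have [r [/andP[ar rt] yr] ser] := sup_adherent e0 hs.
  have rs : r <= s by apply: sup_upper_bound => //; split => //; rewrite ar rt.
  have := Lip r s; rewrite ar rt as_ st => /(_ isT isT).
  rewrite (ler0_norm (x := r - s)); last lra.
  move=> h.
  have h2 : L * (- (r - s)) <= L * e by apply: ler_wpM2l => //; rewrite /s; lra.
  have h3 := ler_norm (y r - y s).
  have h4 : y r - y s <= `|y r - y s| by apply: ler_norm.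
  nra.
exists (sup A); split => //.
- rewrite lt_neqAle st andbT; apply/negP => /eqP e.
  by move: ys; rewrite e => /le_lt_trans /(_ yt); rewrite ltxx.
- move=> r /andP[sr rt]; rewrite ltNge; apply/negP => yr.
  have : r <= sup A.
    apply: sup_upper_bound => //; split => //; rewrite rt andbT.
    exact: le_trans (ltW sr).
  by rewrite leNgt sr.
Qed.

Lemma geo_le0 (B z : R) : 0 <= B -> (forall k : nat, - (B / (2 ^+ k)) <= z) -> 0 <= z.
Proof.
move=> B0 h; rewrite leNgt; apply/negP => z0.
have [k hk] : exists k : nat, B / (- z) < k%:R.
  have nz : 0 < - z by rewrite oppr_gt0.
  exists (Num.truncn (B / - z)).+1.
  by case/andP: (truncn_itv (divr_ge0 B0 (ltW nz))).
have k2 : (k%:R : R) <= 2 ^+ k.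
  by rewrite -natrX ler_nat; apply: ltnW; apply: ltn_expl.
have p : 0 < (2 : R) ^+ k by apply: exprn_gt0.
have := h k.
have : B < - z * k%:R by rewrite -ltr_pdivrMl ?oppr_gt0 // mulrC.
move=> hb hz.
have : B / 2 ^+ k * 2 ^+ k = B by rewrite divfK // gt_eqF.
nra.
Qed.


Definition Lip (y : R -> R) (T L : R) :=
  forall r s, 0 <= r <= T -> 0 <= s <= T -> `|y r - y s| <= L * `|r - s|.

Definition Hyp (y w : R -> R) (T K : R) :=
  forall s t M, 0 <= s -> s <= t -> t <= T -> 0 <= M ->
     (forall r, s < r <= t -> y r < 0) ->
     (forall r, s <= r <= t -> - M <= y r /\ - M <= w r) ->
     y s - K * (t - s) * M <= y t.

Lemma pos_step (y w : R -> R) (a T K L M h r : R) :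
  0 <= a -> 0 <= K -> 0 <= L -> 0 <= M -> 0 <= h -> K * h <= 1/2 ->
  Lip y T L -> Hyp y w T K ->
  0 <= y a -> a <= r -> r <= T -> r <= a + h ->
  (forall q, a <= q -> q <= T -> q <= a + h -> - M <= y q /\ - M <= w q) ->
  - (M / 2) <= y r.
Proof.
move=> a0 K0 L0 M0 h0 Kh Ly Hy ya ar rT rh Q.
have [yr|yr] := leP 0 (y r).
  apply: le_trans yr; rewrite oppr_le0; exact: divr_ge0.
have [s [as_ sr ys ysr]] : exists s, [/\ a <= s, s < r, 0 <= y s &
    forall q, s < q <= r -> y q < 0].
  apply: (@last_nonneg y a r L L0 ar ya yr) => q p /andP[aq qr] /andP[ap pr].
  apply: Ly; apply/andP; split; lra.
have := Hy s r M (le_trans a0 as_) (ltW sr) rT M0 ysr.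
have hb : forall q, s <= q <= r -> - M <= y q /\ - M <= w q.
  move=> q /andP[sq qr]; apply: Q; lra.
move=> /(_ hb) hh.
have : K * (r - s) * M <= K * h * M.
  apply: ler_wpM2r => //; apply: ler_wpM2l => //; lra.
nra.
Qed.

Lemma pos2 (y1 y2 : R -> R) (T K L : R) :
  0 <= K -> 0 <= L -> Lip y1 T L -> Lip y2 T L ->
  0 <= y1 0 -> 0 <= y2 0 ->
  Hyp y1 y2 T K -> Hyp y2 y1 T K ->
  forall t, 0 <= t <= T -> 0 <= y1 t /\ 0 <= y2 t.
Proof.
move=> K0 L0 L1 L2 y10 y20 H1 H2.
pose h := (2 * K + 2)^-1.
have h0 : 0 < h by rewrite /h invr_gt0; lra.
have Kh : K * h <= 1/2.
  rewrite /h; have hh : (2 * K + 2) * (2 * K + 2)^-1 = 1 by rewrite mulfV //; lra.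
  nra.
have glob : forall t, 0 <= t <= T -> - (L * T) <= y1 t /\ - (L * T) <= y2 t.
  move=> t /andP[t0 tT].
  have T0 : 0 <= T by lra.
  have hT : L * `|t - 0| <= L * T by rewrite subr0 ger0_norm //; apply: ler_wpM2l.
  have := L1 t 0; rewrite t0 tT lexx T0 => /(_ isT isT) h1.
  have := L2 t 0; rewrite t0 tT lexx T0 => /(_ isT isT) h2.
  move: h1 h2; rewrite !ler_norml => /andP[? ?] /andP[? ?].
  split; lra.
have P : forall n : nat, forall t, 0 <= t <= T -> t <= n%:R * h ->
    0 <= y1 t /\ 0 <= y2 t.
  elim=> [|n IH] t /andP[t0 tT] tn.
    have -> : t = 0 by rewrite mul0r in tn; lra.
    by split.
  set a := n%:R * h.
  have a0 : 0 <= a by rewrite /a mulr_ge0 // ltW.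
  have [ta|aLt] := leP t a; first by apply: IH => //; rewrite t0 tT.
  have aT : 0 <= a <= T by rewrite a0 /=; lra.
  have [ya1 ya2] := IH a aT (lexx _).
  have tah : t <= a + h by move: tn; rewrite -natr1 mulrDl mul1r.
  have LT0 : 0 <= L * T by rewrite mulr_ge0 //; lra.
  have Q : forall k : nat, forall q, a <= q -> q <= T -> q <= a + h ->
      - (L * T / 2 ^+ k) <= y1 q /\ - (L * T / 2 ^+ k) <= y2 q.
    elim=> [|k IHk] q aq qT qh.
      by rewrite expr0 divr1; apply: glob; rewrite qT andbT; lra.
    have M0 : 0 <= L * T / 2 ^+ k by rewrite divr_ge0 // exprn_ge0.
    have e : L * T / 2 ^+ k.+1 = L * T / 2 ^+ k / 2.
      by rewrite exprS invfM [2^-1 * _]mulrC mulrA.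
    rewrite e; split.
    - apply: (@pos_step y1 y2 a T K L (L * T / 2 ^+ k) h q a0 K0 L0 M0 (ltW h0) Kh L1 H1 ya1 aq qT qh).
      exact: IHk.
    - apply: (@pos_step y2 y1 a T K L (L * T / 2 ^+ k) h q a0 K0 L0 M0 (ltW h0) Kh L2 H2 ya2 aq qT qh).
      by move=> p ap pT ph; have [? ?] := IHk p ap pT ph; split.
  have QQ := Q _ t (ltW aLt) tT tah.
  split; apply: (geo_le0 (L * T) _ LT0) => k; by case: (QQ k).
move=> t /andP[t0 tT].
apply: (P (Num.truncn (t / h)).+1); first by rewrite t0 tT.
have := truncn_itv (divr_ge0 t0 (ltW h0)).
case/andP=> _ /ltW; rewrite ler_pdivrMr //.
Qed.


Notation mu := (@lebesgue_measure R).
Definition J (g : R -> R) (s t : R) := Rintegral mu `]s, t] g.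
Definition Int0 (g : R -> R) (t : R) := Rintegral mu `[0, t] g.

Lemma int_split g s t : 0 <= s -> s <= t ->
  mu.-integrable `[0, t] (EFin \o g) -> Int0 g t - Int0 g s = J g s t.
Proof.
move=> s0 st ig; rewrite /Int0 /J.
by apply: Rintegral_itvB => //; rewrite bnd_simp.
Qed.

Lemma intJ g s t : 0 <= s ->
  mu.-integrable `[0, t] (EFin \o g) -> mu.-integrable `]s, t] (EFin \o g).
Proof.
move=> s0 ig; apply: integrableS ig => //.
move=> r /=; rewrite !in_itv /= => /andP[sr ->]; rewrite andbT.
exact: le_trans (ltW sr).
Qed.

Lemma mu_oc s t : s <= t -> fine (mu `]s, t]) = t - s.
Proof.
move=> st; rewrite lebesgue_measure_itv /=.
case: ifPn => [_|]; first by [].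
rewrite lte_fin -leNgt => ts; have -> : t = s by apply/eqP; rewrite eq_le ts st.
by rewrite subrr.
Qed.

Lemma int_cst_oc s t c : mu.-integrable `]s, t] (EFin \o (fun _ : R => c)).
Proof.
apply: measurable_bounded_integrable => //.
  - apply: (@le_lt_trans _ _ (if (s%:E < t%:E)%E then (t%:E - s%:E)%E else 0%E)).
      by rewrite le_eqVlt; apply/orP; left; apply/eqP; exact: (lebesgue_measure_itv `]s, t]).
    by case: ifPn => // _; exact: ltry.
- exact: bounded_cst.
Qed.

Lemma J_ub g s t c : s <= t -> mu.-integrable `]s, t] (EFin \o g) ->
  (forall r, s < r <= t -> g r <= c) -> J g s t <= c * (t - s).
Proof.
move=> st ig gc; rewrite /J -mu_oc // -Rintegral_cst //.
apply: le_Rintegral => //; try exact: int_cst_oc.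
all: by move=> r /=; rewrite in_itv /=; apply: gc.
Qed.

Lemma J_lb g s t c : s <= t -> mu.-integrable `]s, t] (EFin \o g) ->
  (forall r, s < r <= t -> c <= g r) -> c * (t - s) <= J g s t.
Proof.
move=> st ig gc; rewrite /J -mu_oc // -Rintegral_cst //.
apply: le_Rintegral => //; try exact: int_cst_oc.
all: by move=> r /=; rewrite in_itv /=; apply: gc.
Qed.

Lemma J_lin g1 g2 a s t : mu.-integrable `]s, t] (EFin \o g1) ->
  mu.-integrable `]s, t] (EFin \o g2) ->
  J g1 s t + a * J g2 s t = J (fun r => g1 r + a * g2 r) s t.
Proof.
move=> i1 i2; rewrite /J -RintegralZl // -RintegralD //.
have -> : EFin \o (fun r => a * g2 r) = (fun x => (a%:E * (EFin \o g2) x)%E) by apply: funext => r /=; rewrite EFinM.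
exact: integrableZl.
Qed.


Lemma bound1 (g : R -> R) (y : R -> R) (y0 T : R) :
  (forall t, 0 <= t -> y t = y0 + Int0 g t) ->
  (forall t, 0 <= t -> mu.-integrable `[0, t] (EFin \o g)) ->
  forall t, 0 <= t <= T -> `|y t| <= `|y0| + Int0 (fun r => `|g r|) T.
Proof.
move=> hy ig t /andP[t0 tT]; rewrite hy //.
apply: (le_trans (ler_normD _ _)); rewrite lerD2l.
have i1 := ig t t0.
apply: (le_trans (le_normr_Rintegral _ _)) => //.
have iT : mu.-integrable `[0, T] (EFin \o (fun r => `|g r|)).
  exact: (integrable_norm (ig T (le_trans t0 tT))).
have := int_split _ _ _ t0 tT iT.
have : 0 <= J (fun r => `|g r|) t T by apply: Rintegral_ge0.
rewrite /Int0; lra.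
Qed.

Lemma lip1 (g : R -> R) (y : R -> R) (T C : R) :
  (forall s t, 0 <= s -> s <= t -> y t - y s = J g s t) ->
  (forall t, 0 <= t -> mu.-integrable `[0, t] (EFin \o g)) ->
  (forall r, 0 <= r <= T -> `|g r| <= C) -> Lip y T C.
Proof.
move=> hy ig gC.
have key : forall r s, 0 <= s -> s <= r -> r <= T -> `|y r - y s| <= C * `|r - s|.
  move=> r s s0 sr rT; rewrite hy // (ger0_norm (x := r - s)) ?subr_ge0 //.
  have iJ := intJ _ _ _ s0 (ig r (le_trans s0 sr)).
  have hC : forall q, s < q <= r -> `|g q| <= C.
    move=> q /andP[sq qr]; apply: gC; apply/andP; split; lra.
  rewrite ler_norml; apply/andP; split.
  - rewrite -mulNr; apply: J_lb => // q /hC; rewrite ler_norml => /andP[] //.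
  - apply: J_ub => // q /hC; rewrite ler_norml => /andP[] //.
move=> r s /andP[r0 rT] /andP[s0 sT].
have [sr|rs] := leP s r; first exact: key.
by rewrite distrC (distrC r); apply: key => //; apply: ltW.
Qed.

Lemma lipN (y : R -> R) (T L c : R) : Lip y T L -> Lip (fun t => c - y t) T L.
Proof.
move=> h r s hr hs; have := h r s hr hs.
by rewrite (_ : c - y r - (c - y s) = - (y r - y s)) ?normrN //; ring.
Qed.

Lemma lipO (y : R -> R) (T L : R) : Lip y T L -> Lip (fun t => - y t) T L.
Proof.
move=> h r s hr hs; have := h r s hr hs.
by rewrite (_ : - y r - - y s = - (y r - y s)) ?normrN //; ring.
Qed.

End RealAux.
Arguments last_nonneg {R}.
Arguments geo_le0 {R}.
Arguments Lip {R}.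
Arguments Hyp {R}.
Arguments pos_step {R}.
Arguments pos2 {R}.
Arguments J {R}.
Arguments Int0 {R}.
Arguments int_split {R}.
Arguments intJ {R}.
Arguments mu_oc {R}.
Arguments int_cst_oc {R}.
Arguments J_ub {R}.
Arguments J_lb {R}.
Arguments J_lin {R}.
Arguments bound1 {R}.
Arguments lip1 {R}.
Arguments lipN {R}.
Arguments lipO {R}.

Section HypJ.
Variable R : realType.
Notation mu := (@lebesgue_measure R).

Lemma HypJp (y w g : R -> R) (T K : R) :
  (forall s t, 0 <= s -> s <= t -> y t - y s = J g s t) ->
  (forall s t, 0 <= s -> s <= t -> mu.-integrable `]s, t] (EFin \o g)) ->
  (forall r M, 0 <= r -> r <= T -> 0 <= M -> y r < 0 -> - M <= y r -> - M <= w r ->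
     - (K * M) <= g r) ->
  Hyp y w T K.
Proof.
move=> hy ig hg s t M s0 st tT M0 neg bd.
have := J_lb g s t (- (K * M)) st (ig s t s0 st).
have -> : K * (t - s) * M = K * M * (t - s) by ring.
rewrite -(hy s t s0 st) => h.
have hh : forall r, s < r <= t -> - (K * M) <= g r.
  move=> r /andP[sr rt]; have [b1 b2] : - M <= y r /\ - M <= w r by apply: bd; rewrite (ltW sr) rt.
  apply: hg => //; [exact: le_trans (ltW sr) | exact: le_trans tT | by apply: neg; rewrite sr rt].
move: (h hh); rewrite mulNr; lra.
Qed.

Lemma HypJn (y w g : R -> R) (T K : R) :
  (forall s t, 0 <= s -> s <= t -> y t - y s = - J g s t) ->
  (forall s t, 0 <= s -> s <= t -> mu.-integrable `]s, t] (EFin \o g)) ->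
  (forall r M, 0 <= r -> r <= T -> 0 <= M -> y r < 0 -> - M <= y r -> - M <= w r ->
     g r <= K * M) ->
  Hyp y w T K.
Proof.
move=> hy ig hg s t M s0 st tT M0 neg bd.
have := J_ub g s t (K * M) st (ig s t s0 st).
have -> : K * (t - s) * M = K * M * (t - s) by ring.
have := hy s t s0 st => e h.
have hh : forall r, s < r <= t -> g r <= K * M.
  move=> r /andP[sr rt]; have [b1 b2] : - M <= y r /\ - M <= w r by apply: bd; rewrite (ltW sr) rt.
  apply: hg => //; [exact: le_trans (ltW sr) | exact: le_trans tT | by apply: neg; rewrite sr rt].
move: (h hh); lra.
Qed.

Lemma Hyp0 (y : R -> R) (T K : R) : 0 <= K -> Hyp (fun _ => 0) y T K.
Proof.
move=> K0 s t M s0 st tT M0 _ _.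
have : 0 <= K * (t - s) * M by rewrite !mulr_ge0 // subr_ge0.
lra.
Qed.

Lemma Lip0 (T L : R) : 0 <= L -> Lip (fun _ : R => 0) T L.
Proof. by move=> L0 r s _ _; rewrite subrr normr0 mulr_ge0. Qed.

End HypJ.
Arguments HypJp {R}. Arguments HypJn {R}. Arguments Hyp0 {R}. Arguments Lip0 {R}.
Lemma Int00 (R : realType) (g : R -> R) : Int0 g 0 = 0.
Proof. by rewrite /Int0 set_itv1 Rintegral_set1. Qed.
Lemma int_lin (R : realType) (s t : R) (g1 g2 : R -> R) (a : R) :
  (@lebesgue_measure R).-integrable `]s, t] (EFin \o g1) ->
  (@lebesgue_measure R).-integrable `]s, t] (EFin \o g2) ->
  (@lebesgue_measure R).-integrable `]s, t] (EFin \o (fun r => g1 r + a * g2 r)).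
Proof.
move=> i1 i2.
have hh := integrableD _ i1 (integrableZl _ a i2).
apply: (eq_integrable _ _ _ _ (hh _ _)) => //.
Qed.

Section Main.
Variable R : realType.
Variables (eta bmin bnom gnom gmax Imax : R).
Hypotheses (heta : 0 < eta) (hbmin : 0 < bmin) (hb : bmin <= bnom)
  (hgnom : 0 < gnom) (hg : gnom <= gmax) (hI0 : 0 < Imax) (hI1 : Imax < 1).
Variables (u : R -> R * R) (x0 : R * R * R) (x : R -> R * R * R).
Hypotheses (hu : admissible bmin bnom gnom gmax u) (hx : is_solution eta u x0 x)
  (hx0 : Pi x0).

Local Ltac pre := move: (heta) (hbmin) (hb) (hgnom) (hg) (hI0) (hI1) => ? ? ? ? ? ? ?.
Local Ltac clr := repeat match goal with
  | H : forall _, _ |- _ => clear H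
  | H : Lip _ _ _ |- _ => clear H
  | H : Hyp _ _ _ _ |- _ => clear H
  | H : admissible _ _ _ _ _ |- _ => clear H
  | H : is_solution _ _ _ _ |- _ => clear H
  | H : Pi _ |- _ => clear H
  | H : (_ : Prop) |- _ => match type of H with is_true (_ <= _) => fail 1 | is_true (_ < _) => fail 1 | _ = _ => fail 1 | _ => clear H end
  end.
Local Ltac Lra := pre; clr; lra.
Local Ltac Nra := pre; clr; nra.

Notation gS := (fS u x).
Notation gE := (fE eta u x).
Notation gI := (fI eta u x).

Lemma ub r : 0 <= r -> bmin <= (u r).1 <= bnom /\ gnom <= (u r).2 <= gmax.
Proof. by case: hu => _ _; apply. Qed.

Lemma iS t : 0 <= t -> (@lebesgue_measure R).-integrable `[0, t] (EFin \o gS).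
Proof. by move=> t0; case: (hx _ t0). Qed.
Lemma iE t : 0 <= t -> (@lebesgue_measure R).-integrable `[0, t] (EFin \o gE).
Proof. by move=> t0; case: (hx _ t0) => _ []. Qed.
Lemma iI t : 0 <= t -> (@lebesgue_measure R).-integrable `[0, t] (EFin \o gI).
Proof. by move=> t0; case: (hx _ t0) => _ [] _ []. Qed.

Lemma eS t : 0 <= t -> Sc (x t) = Sc x0 + Int0 gS t.
Proof. by move=> t0; case: (hx _ t0) => _ [] _ [] _ []. Qed.
Lemma eE t : 0 <= t -> Ec (x t) = Ec x0 + Int0 gE t.
Proof. by move=> t0; case: (hx _ t0) => _ [] _ [] _ [] _ []. Qed.
Lemma eI t : 0 <= t -> Ic (x t) = Ic x0 + Int0 gI t.
Proof. by move=> t0; case: (hx _ t0) => _ [] _ [] _ [] _ []. Qed.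

Lemma dS s t : 0 <= s -> s <= t -> Sc (x t) - Sc (x s) = J gS s t.
Proof.
move=> s0 st; have t0 := le_trans s0 st.
rewrite -(int_split _ _ _ s0 st (iS _ t0)) eS // eS //; ring.
Qed.
Lemma dE s t : 0 <= s -> s <= t -> Ec (x t) - Ec (x s) = J gE s t.
Proof.
move=> s0 st; have t0 := le_trans s0 st.
rewrite -(int_split _ _ _ s0 st (iE _ t0)) eE // eE //; ring.
Qed.
Lemma dI s t : 0 <= s -> s <= t -> Ic (x t) - Ic (x s) = J gI s t.
Proof.
move=> s0 st; have t0 := le_trans s0 st.
rewrite -(int_split _ _ _ s0 st (iI _ t0)) eI // eI //; ring.
Qed.

Lemma jS s t : 0 <= s -> s <= t -> (@lebesgue_measure R).-integrable `]s, t] (EFin \o gS).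
Proof. move=> s0 st; exact: (intJ _ _ _ s0 (iS _ (le_trans s0 st))). Qed.
Lemma jE s t : 0 <= s -> s <= t -> (@lebesgue_measure R).-integrable `]s, t] (EFin \o gE).
Proof. move=> s0 st; exact: (intJ _ _ _ s0 (iE _ (le_trans s0 st))). Qed.
Lemma jI s t : 0 <= s -> s <= t -> (@lebesgue_measure R).-integrable `]s, t] (EFin \o gI).
Proof. move=> s0 st; exact: (intJ _ _ _ s0 (iI _ (le_trans s0 st))). Qed.

Lemma x0b : `|Sc x0| <= 1 /\ `|Ec x0| <= 1 /\ `|Ic x0| <= 1.
Proof.
case: hx0 => /andP[a b] /andP[c d] /andP[e f] _.
by rewrite !ger0_norm.
Qed.

Lemma bound T : 0 <= T -> exists B, 1 <= B /\ forall t, 0 <= t <= T ->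
  `|Sc (x t)| <= B /\ `|Ec (x t)| <= B /\ `|Ic (x t)| <= B.
Proof.
move=> T0.
pose B := 1 + Int0 (fun r => `|gS r|) T + Int0 (fun r => `|gE r|) T
            + Int0 (fun r => `|gI r|) T.
have p1 : 0 <= Int0 (fun r => `|gS r|) T by apply: Rintegral_ge0.
have p2 : 0 <= Int0 (fun r => `|gE r|) T by apply: Rintegral_ge0.
have p3 : 0 <= Int0 (fun r => `|gI r|) T by apply: Rintegral_ge0.
have [b1 [b2 b3]] := x0b.
exists B; split; first by rewrite /B; Lra.
move=> t tT.
have h1 := bound1 _ (fun t => Sc (x t)) _ _ eS iS _ tT.
have h2 := bound1 _ (fun t => Ec (x t)) _ _ eE iE _ tT.
have h3 := bound1 _ (fun t => Ic (x t)) _ _ eI iI _ tT.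
rewrite /= in h1 h2 h3.
rewrite /B; split; [|split]; Lra.
Qed.

Lemma normM3 (p q w P Q W : R) : `|p| <= P -> `|q| <= Q -> `|w| <= W ->
  `|p * q * w| <= P * Q * W.
Proof.
move=> hp hq hw; rewrite !normrM.
apply: ler_pM => //; exact: ler_pM.
Qed.

Lemma gbound T B : 1 <= B -> (forall t, 0 <= t <= T ->
  `|Sc (x t)| <= B /\ `|Ec (x t)| <= B /\ `|Ic (x t)| <= B) ->
  forall r, 0 <= r <= T ->
  `|gS r| <= bnom * B * B + eta * B + gmax * B /\
  `|gE r| <= bnom * B * B + eta * B + gmax * B /\
  `|gI r| <= bnom * B * B + eta * B + gmax * B.
Proof.
move=> B1 hB r rT.
have [b1 [b2 b3]] := hB r rT.
have [/andP[u1 u2] /andP[u3 u4]] := ub r (proj1 (andP rT)).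
have nb : `|(u r).1| <= bnom by rewrite ger0_norm // (le_trans (ltW hbmin) u1).
have ng : `|(u r).2| <= gmax by rewrite ger0_norm // (le_trans (ltW hgnom) u3).
have h1 := normM3 _ _ _ _ _ _ nb b1 b3.
have h2 : `|eta * Ec (x r)| <= eta * B by rewrite normrM gtr0_norm // ler_wpM2l //; Lra.
have h3 : `|(u r).2 * Ic (x r)| <= gmax * B by rewrite normrM; apply: ler_pM.
have h4 : `|eta * Ec (x r)| <= eta * B by [].
have p0 : 0 <= bnom * B * B by rewrite !mulr_ge0 //; Lra.
have p1 : 0 <= eta * B by rewrite mulr_ge0 //; Lra.
have p2 : 0 <= gmax * B by rewrite mulr_ge0 //; Lra.
rewrite /fS /fE /fI; split; [|split].
- by rewrite normrN; Lra.
- apply: (le_trans (ler_normB _ _)); Lra.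
- apply: (le_trans (ler_normB _ _)); Lra.
Qed.


Lemma x00 : Sc (x 0) = Sc x0 /\ Ec (x 0) = Ec x0 /\ Ic (x 0) = Ic x0.
Proof. by rewrite eS // eE // eI // !Int00 !addr0. Qed.

Lemma setup T : 0 <= T -> exists B, 1 <= B /\
  (forall t, 0 <= t <= T ->
    `|Sc (x t)| <= B /\ `|Ec (x t)| <= B /\ `|Ic (x t)| <= B) /\
  Lip (fun t => Sc (x t)) T (bnom * B * B + eta * B + gmax * B) /\
  Lip (fun t => Ec (x t)) T (bnom * B * B + eta * B + gmax * B) /\
  Lip (fun t => Ic (x t)) T (bnom * B * B + eta * B + gmax * B).
Proof.
move=> T0; have [B [B1 hB]] := bound _ T0.
have gb := gbound T B B1 hB.
exists B; split => //; split => //; split; [|split].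
- apply: (lip1 gS) => //; [exact: dS | exact: iS | by move=> r /gb []].
- apply: (lip1 gE) => //; [exact: dE | exact: iE | by move=> r /gb [] _ []].
- apply: (lip1 gI) => //; [exact: dI | exact: iI | by move=> r /gb [] _ []].
Qed.

Lemma S_ge0 t : 0 <= t -> 0 <= Sc (x t).
Proof.
move=> t0; have [B [B1 [hB [LS [LE LI]]]]] := setup _ t0.
have L0 : 0 <= bnom * B * B + eta * B + gmax * B.
  by rewrite !addr_ge0 // !mulr_ge0 //; Lra.
have K0 : 0 <= bnom * B by rewrite mulr_ge0 //; Lra.
have H1 : Hyp (fun t => Sc (x t)) (fun _ => 0) t (bnom * B).
  apply: (HypJp _ _ gS) => //; [exact: dS | exact: jS |].
  move=> r M r0 rT M0 neg b1 _.
  have [_ [_ bI]] := hB r (introT andP (conj r0 rT)).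
  have [/andP[u1 u2] _] := ub r r0.
  have nb : `|(u r).1| <= bnom by rewrite ger0_norm // (le_trans (ltW hbmin) u1).
  have nS : `|Sc (x r)| <= M by rewrite ltr0_norm //; Lra.
  have := normM3 _ _ _ _ _ _ nb nS bI.
  rewrite /fS => h; have := ler_norm ((u r).1 * Sc (x r) * Ic (x r)).
  Lra.
case: hx0 => /andP[s0 _] _ _ _.
have [e1 [e2 e3]] := x00.
rewrite -e1 in s0.
have := pos2 _ _ t (bnom * B) _ K0 L0 LS (Lip0 _ _ L0) s0 (lexx 0) H1 (Hyp0 _ _ _ K0) t.
by rewrite t0 lexx => /(_ isT) [].
Qed.

Lemma EI_ge0 t : 0 <= t -> 0 <= Ec (x t) /\ 0 <= Ic (x t).
Proof.
move=> t0; have [B [B1 [hB [LS [LE LI]]]]] := setup _ t0.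
have L0 : 0 <= bnom * B * B + eta * B + gmax * B.
  by rewrite !addr_ge0 // !mulr_ge0 //; Lra.
have K0 : 0 <= bnom * B + eta by rewrite addr_ge0 // ?mulr_ge0 //; Lra.
case: hx0 => _ /andP[e0 _] /andP[i0 _] _.
have [e1 [e2 e3]] := x00.
rewrite -e2 in e0; rewrite -e3 in i0.
apply: (pos2 (fun t => Ec (x t)) (fun t => Ic (x t)) t (bnom * B + eta) _ K0 L0 LE LI e0 i0); last by rewrite t0 lexx.
- apply: (HypJp _ _ gE) => //; [exact: dE | exact: jE |].
  move=> r M r0 rT M0 neg b1 b2.
  have [bS _] := hB r (introT andP (conj r0 rT)).
  have [/andP[u1 u2] _] := ub r r0.
  have Sr := S_ge0 _ r0.
  have SB : Sc (x r) <= B by move: bS; rewrite ger0_norm.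
  rewrite /fE.
  have h1 : 0 <= (u r).1 * Sc (x r) by rewrite mulr_ge0 //; Lra.
  have h2 : (u r).1 * Sc (x r) <= bnom * B by apply: ler_pM => //; Lra.
  have h3 : (u r).1 * Sc (x r) * Ic (x r) >= - ((u r).1 * Sc (x r) * M) by Nra.
  have h4 : (u r).1 * Sc (x r) * M <= bnom * B * M by apply: ler_wpM2r.
  have : 0 <= - (eta * Ec (x r)) by rewrite oppr_ge0 pmulr_rle0 //; Lra.
  Nra.
- apply: (HypJp _ _ gI) => //; [exact: dI | exact: jI |].
  move=> r M r0 rT M0 neg b1 b2.
  have [_ /andP[u1 u2]] := ub r r0.
  rewrite /fI.
  have : 0 <= (u r).2 * - Ic (x r) by rewrite mulr_ge0 //; Lra.
  have : - (eta * M) <= eta * Ec (x r) by rewrite -mulrN ler_wpM2l //; Lra.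
  have : 0 <= (bnom * B) * M by rewrite !mulr_ge0 //; Lra.
  Nra.
Qed.


Lemma S_dec s t : 0 <= s -> s <= t -> Sc (x t) <= Sc (x s).
Proof.
move=> s0 st.
have := J_ub gS s t 0 st (jS _ _ s0 st).
rewrite -(dS _ _ s0 st) mul0r => h.
suff : Sc (x t) - Sc (x s) <= 0 by Lra.
apply: h => r /andP[sr rt].
have r0 : 0 <= r by Lra.
have [/andP[u1 u2] _] := ub r r0.
have [_ Ir] := EI_ge0 _ r0.
rewrite /fS oppr_le0 !mulr_ge0 //; [Lra | exact: S_ge0].
Qed.

Lemma N_dec t : 0 <= t -> Sc (x t) + Ec (x t) + Ic (x t) <= Sc x0 + Ec x0 + Ic x0.
Proof.
move=> t0.
have [e1 [e2 e3]] := x00.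
have i1 := int_lin _ 0 t gS gE 1 (jS _ _ (lexx 0) t0) (jE _ _ (lexx 0) t0).
have h1 := J_lin gS gE 1 0 t (jS _ _ (lexx 0) t0) (jE _ _ (lexx 0) t0).
have h2 := J_lin (fun r => gS r + 1 * gE r) gI 1 0 t i1 (jI _ _ (lexx 0) t0).
have := J_ub (fun r => (gS r + 1 * gE r) + 1 * gI r) 0 t 0 t0
  (int_lin _ 0 t _ gI 1 i1 (jI _ _ (lexx 0) t0)).
rewrite -h2 -h1 -(dS _ _ (lexx 0) t0) -(dE _ _ (lexx 0) t0) -(dI _ _ (lexx 0) t0).
rewrite e1 e2 e3 mul0r => h.
suff : Sc (x t) - Sc x0 + 1 * (Ec (x t) - Ec x0) + 1 * (Ic (x t) - Ic x0) <= 0 by Lra.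
apply: h => r /andP[sr rt].
have r0 : 0 <= r by Lra.
have [_ /andP[u1 u2]] := ub r r0.
have [_ Ir] := EI_ge0 _ r0.
rewrite /fS /fE /fI !mul1r.
have : 0 <= (u r).2 * Ic (x r) by rewrite mulr_ge0 //; Lra.
Lra.
Qed.

Lemma Pi_t t : 0 <= t -> Pi (x t).
Proof.
move=> t0; have := N_dec _ t0; have := S_ge0 _ t0; have [e i] := EI_ge0 _ t0.
case: hx0 => _ _ _ n0 s0 n.
rewrite /Pi; split; try (apply/andP; split); Lra.
Qed.

Lemma box (hS : Sc x0 <= gnom / bnom) (hI : Ic x0 <= Imax)
  (hE : Ec x0 <= gnom / eta * Imax) t : 0 <= t ->
  Ic (x t) <= Imax /\ Ec (x t) <= gnom / eta * Imax.
Proof.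
move=> t0; have [B [B1 [hB [LS [LE LI]]]]] := setup _ t0.
have L0 : 0 <= bnom * B * B + eta * B + gmax * B.
  by rewrite !addr_ge0 // !mulr_ge0 //; Lra.
have K0 : 0 <= eta + bnom by Lra.
have [e1 [e2 e3]] := x00.
have eEs : eta * (gnom / eta * Imax) = gnom * Imax.
  by rewrite mulrA mulrCA mulfV ?mulr1 //; apply: lt0r_neq0.
have bs : bnom * (gnom / bnom) = gnom.
  by rewrite mulrCA mulfV ?mulr1 //; apply: lt0r_neq0; Lra.
have H1 : Hyp (fun t => Imax - Ic (x t)) (fun t => gnom / eta * Imax - Ec (x t)) t (eta + bnom).
  apply: (HypJn _ _ gI) => //; last first.
    move=> r M r0 rT M0 neg b1 b2.
    have [_ /andP[u1 u2]] := ub r r0.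
    rewrite /fI.
    have : eta * Ec (x r) <= eta * (gnom / eta * Imax + M) by rewrite ler_wpM2l //; Lra.
    have : (u r).2 * Imax <= (u r).2 * Ic (x r) by rewrite ler_wpM2l //; Lra.
    have : gnom * Imax <= (u r).2 * Imax by rewrite ler_wpM2r //; Lra.
    have : 0 <= bnom * M by rewrite mulr_ge0 //; Lra.
    Nra.
  - by move=> s' t' s0 st; exact: jI.
  - by move=> s' t' s0 st; rewrite -(dI _ _ s0 st); ring.
have H2 : Hyp (fun t => gnom / eta * Imax - Ec (x t)) (fun t => Imax - Ic (x t)) t (eta + bnom).
  apply: (HypJn _ _ gE) => //; last first.
    move=> r M r0 rT M0 neg b1 b2.
    have [/andP[u1 u2] _] := ub r r0.
    have Sr := S_ge0 _ r0.
    have [_ Ir] := EI_ge0 _ r0.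
    have S1 : Sc (x r) <= gnom / bnom by apply: (le_trans (S_dec _ _ (lexx 0) r0)); rewrite e1.
    have S2 : Sc (x r) <= 1 by case: (Pi_t _ r0) => /andP[].
    rewrite /fE.
    have h1 : 0 <= (u r).1 * Sc (x r) by rewrite mulr_ge0 //; Lra.
    have h2 : (u r).1 * Sc (x r) <= gnom by rewrite -bs; apply: ler_pM => //; Lra.
    have h3 : (u r).1 * Sc (x r) <= bnom by rewrite -(mulr1 bnom); apply: ler_pM => //; Lra.
    have h4 : (u r).1 * Sc (x r) * Ic (x r) <= (u r).1 * Sc (x r) * (Imax + M) by rewrite ler_wpM2l //; Lra.
    have h5 : eta * (gnom / eta * Imax) <= eta * Ec (x r) by rewrite ler_wpM2l //; Lra.
    have : 0 <= eta * M by rewrite mulr_ge0 //; Lra.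
    Nra.
  - by move=> s' t' s0 st; exact: jE.
  - by move=> s' t' s0 st; rewrite -(dE _ _ s0 st); ring.
have y10 : 0 <= Imax - Ic (x 0) by rewrite e3; Lra.
have y20 : 0 <= gnom / eta * Imax - Ec (x 0) by rewrite e2; Lra.
have := pos2 _ _ t (eta + bnom) _ K0 L0 (lipN _ _ _ _ LI) (lipN _ _ _ _ LE) y10 y20 H1 H2 t.
by rewrite t0 lexx => /(_ isT) []; split; Lra.
Qed.

Lemma dfe (hE : Ec x0 = 0) (hI : Ic x0 = 0) t : 0 <= t ->
  Ec (x t) = 0 /\ Ic (x t) = 0.
Proof.
move=> t0; have [B [B1 [hB [LS [LE LI]]]]] := setup _ t0.
have L0 : 0 <= bnom * B * B + eta * B + gmax * B.
  by rewrite !addr_ge0 // !mulr_ge0 //; Lra.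
have K0 : 0 <= eta + bnom by Lra.
have [e1 [e2 e3]] := x00.
have H1 : Hyp (fun t => - Ec (x t)) (fun t => - Ic (x t)) t (eta + bnom).
  apply: (HypJn _ _ gE) => //; last first.
    move=> r M r0 rT M0 neg b1 b2.
    have [/andP[u1 u2] _] := ub r r0.
    have Sr := S_ge0 _ r0.
    have [_ Ir] := EI_ge0 _ r0.
    have S2 : Sc (x r) <= 1 by case: (Pi_t _ r0) => /andP[].
    rewrite /fE.
    have h1 : 0 <= (u r).1 * Sc (x r) by rewrite mulr_ge0 //; Lra.
    have h3 : (u r).1 * Sc (x r) <= bnom by rewrite -(mulr1 bnom); apply: ler_pM => //; Lra.
    have h4 : (u r).1 * Sc (x r) * Ic (x r) <= (u r).1 * Sc (x r) * M by rewrite ler_wpM2l //; Lra.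
    have : 0 <= eta * M by rewrite mulr_ge0 //; Lra.
    have : 0 <= eta * Ec (x r) by rewrite mulr_ge0 //; Lra.
    Nra.
  - by move=> s' t' s0 st; exact: jE.
  - by move=> s' t' s0 st; rewrite -(dE _ _ s0 st); ring.
have H2 : Hyp (fun t => - Ic (x t)) (fun t => - Ec (x t)) t (eta + bnom).
  apply: (HypJn _ _ gI) => //; last first.
    move=> r M r0 rT M0 neg b1 b2.
    have [_ /andP[u1 u2]] := ub r r0.
    rewrite /fI.
    have : eta * Ec (x r) <= eta * M by rewrite ler_wpM2l //; Lra.
    have : 0 <= (u r).2 * Ic (x r) by rewrite mulr_ge0 //; Lra.
    have : 0 <= bnom * M by rewrite mulr_ge0 //; Lra.
    Nra.
  - by move=> s' t' s0 st; exact: jI.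
  - by move=> s' t' s0 st; rewrite -(dI _ _ s0 st); ring.
have y10 : 0 <= - Ec (x 0) by rewrite e2 hE oppr0.
have y20 : 0 <= - Ic (x 0) by rewrite e3 hI oppr0.
have := pos2 _ _ t (eta + bnom) _ K0 L0 (lipO _ _ _ LE) (lipO _ _ _ LI) y10 y20 H1 H2 t.
have [a b] := EI_ge0 _ t0.
by rewrite t0 lexx => /(_ isT) []; split; Lra.
Qed.


Lemma powle (p q : R) (k : nat) : 0 <= p -> p <= q -> p ^+ k <= q ^+ k.
Proof.
move=> p0 pq; elim: k => [|k IH]; first by rewrite !expr0.
rewrite !exprS; apply: ler_pM => //; exact: exprn_ge0.
Qed.

Lemma I_zero (hS : Sc x0 <= gnom / bnom)
  (hB : forall tau, 0 <= tau -> gnom / bnom <= Sc (x tau)) t : 0 <= t -> Ic (x t) = 0.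
Proof.
move=> t0; have [_ It] := EI_ge0 _ t0.
rewrite le_eqVlt in It; case/orP: It => [/eqP <- //|It].
exfalso.
have T0 : 0 <= t + 1 by Lra.
have [B [B1 [hB' [LS [LE LI]]]]] := setup _ T0.
set L := bnom * B * B + eta * B + gmax * B in LS LE LI.
have L0 : 0 <= L by rewrite /L !addr_ge0 // !mulr_ge0 //; Lra.
have I1 : Ic (x t) <= 1 by case: (Pi_t _ t0) => _ _ /andP[].
pose d := Ic (x t) / (2 * (L + 1)).
have d0 : 0 < d by rewrite /d divr_gt0 //; Lra.
have dd : d * (2 * (L + 1)) = Ic (x t) by rewrite /d divfK //; apply: lt0r_neq0; Lra.
have dd2 : d * (2 * (L + 1)) = 2 * (L * d) + 2 * d by ring.
have Ld0 : 0 <= L * d by rewrite mulr_ge0 // ltW.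
have d1 : d <= 1 by Lra.
have Ld : L * d <= Ic (x t) / 2 by Lra.
have hI : forall r, t < r <= t + d -> Ic (x t) / 2 <= Ic (x r).
  move=> r /andP[tr rd].
  have := LI r t; rewrite t0 /=.
  have -> : (0 <= r <= t + 1) by apply/andP; split; Lra.
  have -> : (t <= t + 1) by Lra.
  move=> /(_ isT isT); rewrite (ger0_norm (x := r - t)); last by Lra.
  rewrite ler_norml => /andP[h _].
  have : L * (r - t) <= L * d by rewrite ler_wpM2l //; Lra.
  Lra.
have std : t <= t + d by Lra.
have := J_ub gS t (t + d) (- (bmin * (gnom / bnom) * (Ic (x t) / 2))) std (jS _ _ t0 std).
rewrite -(dS _ _ t0 std) => h.
have hh : forall r, t < r <= t + d -> gS r <= - (bmin * (gnom / bnom) * (Ic (x t) / 2)).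
  move=> r rr; have := hI r rr; case/andP: rr => tr _.
  have r0 : 0 <= r by Lra.
  have [/andP[u1 u2] _] := ub r r0.
  have Sr := hB r r0.
  have s0 : 0 <= gnom / bnom by rewrite divr_ge0 //; Lra.
  move=> Ir; rewrite /fS lerN2.
  apply: ler_pM; [|by Lra| |exact: Ir].
  - by rewrite mulr_ge0 //; Lra.
  - by apply: ler_pM => //; Lra.
have := h hh.
have := hB (t + d) (le_trans t0 std).
have := S_dec _ _ (lexx 0) t0; have [e1 _] := x00; rewrite e1.
have p1 : 0 < gnom / bnom by rewrite divr_gt0 //; Lra.
have p2 : 0 < Ic (x t) / 2 by rewrite divr_gt0 //; Lra.
have p3 : 0 < t + d - t by Lra.
have := mulr_gt0 (mulr_gt0 (mulr_gt0 hbmin p1) p2) p3.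
Lra.
Qed.


Lemma E_zero (hIz : forall t, 0 <= t -> Ic (x t) = 0) t : 0 <= t -> Ec (x t) = 0.
Proof.
move=> t0; have [Et _] := EI_ge0 _ t0.
rewrite le_eqVlt in Et; case/orP: Et => [/eqP <- //|Et].
exfalso.
have T0 : 0 <= t + 1 by Lra.
have [B [B1 [hB' [LS [LE LI]]]]] := setup _ T0.
set L := bnom * B * B + eta * B + gmax * B in LS LE LI.
have L0 : 0 <= L by rewrite /L !addr_ge0 // !mulr_ge0 //; Lra.
have E1 : Ec (x t) <= 1 by case: (Pi_t _ t0) => _ /andP[].
pose d := Ec (x t) / (2 * (L + 1)).
have d0 : 0 < d by rewrite /d divr_gt0 //; Lra.
have dd : d * (2 * (L + 1)) = Ec (x t) by rewrite /d divfK //; apply: lt0r_neq0; Lra.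
have dd2 : d * (2 * (L + 1)) = 2 * (L * d) + 2 * d by ring.
have Ld0 : 0 <= L * d by rewrite mulr_ge0 // ltW.
have d1 : d <= 1 by Lra.
have Ld : L * d <= Ec (x t) / 2 by Lra.
have hE : forall r, t < r <= t + d -> Ec (x t) / 2 <= Ec (x r).
  move=> r /andP[tr rd].
  have := LE r t; rewrite t0 /=.
  have -> : (0 <= r <= t + 1) by apply/andP; split; Lra.
  have -> : (t <= t + 1) by Lra.
  move=> /(_ isT isT); rewrite (ger0_norm (x := r - t)); last by Lra.
  rewrite ler_norml => /andP[h _].
  have : L * (r - t) <= L * d by rewrite ler_wpM2l //; Lra.
  Lra.
have std : t <= t + d by Lra.
have := J_lb gI t (t + d) (eta * (Ec (x t) / 2)) std (jI _ _ t0 std).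
rewrite -(dI _ _ t0 std) (hIz t t0) (hIz (t + d) (le_trans t0 std)) => h.
have hh : forall r, t < r <= t + d -> eta * (Ec (x t) / 2) <= gI r.
  move=> r rr; have := hE r rr; case/andP: rr => tr _.
  have r0 : 0 <= r by Lra.
  move=> Er; rewrite /fI (hIz r r0) mulr0 subr0.
  by rewrite ler_wpM2l //; Lra.
have := h hh.
have p2 : 0 < Ec (x t) / 2 by rewrite divr_gt0 //; Lra.
have p3 : 0 < t + d - t by Lra.
have := mulr_gt0 (mulr_gt0 heta p2) p3.
Lra.
Qed.

Lemma decayA tau : 0 <= tau -> Sc (x tau) < gnom / bnom ->
  exists c lam : R, 0 <= c /\ 0 < lam /\
    forall t, 0 <= t -> Ec (x t) + Ic (x t) <= c * expR (- (lam * t)).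
Proof.
move=> tau0 hs.
set sig := Sc (x tau) in hs.
have sig0 : 0 <= sig := S_ge0 _ tau0.
have bn0 : 0 < bnom by Lra.
have bs : bnom * sig < gnom.
  have e : bnom * (gnom / bnom) = gnom by rewrite mulrCA mulfV ?mulr1 // lt0r_neq0.
  by rewrite -[X in _ < X]e ltr_pM2l.
pose rho := bnom * sig / gnom.
have rg : rho * gnom = bnom * sig by rewrite /rho divfK //; apply: lt0r_neq0.
have rho0 : 0 <= rho by rewrite /rho divr_ge0 // ?mulr_ge0 //; Lra.
have rho1 : rho < 1.
  rewrite /rho ltr_pdivrMr //; Lra.
pose a := (1 + rho) / 2.
have a2 : a * 2 = 1 + rho by rewrite /a divfK //.
have a0 : 0 < a by Lra.
have a1 : a <= 1 by Lra.
pose m := Num.min eta gnom.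
have me : m <= eta by rewrite /m ge_min lexx.
have mg : m <= gnom by rewrite /m ge_min lexx orbT.
have m0 : 0 < m by rewrite /m lt_min heta hgnom.
pose l0 := (1 - a) * m.
have l00 : 0 < l0 by rewrite /l0 mulr_gt0 //; Lra.
pose V := fun r => Ec (x r) + a * Ic (x r).
pose gV := fun r => gE r + a * gI r.
have P : forall r, tau <= r -> gV r <= - l0 * V r.
  move=> r tr; have r0 : 0 <= r by Lra.
  have [/andP[u1 u2] /andP[u3 u4]] := ub r r0.
  have Sr : Sc (x r) <= sig := S_dec _ _ tau0 tr.
  have Sr0 := S_ge0 _ r0.
  have [Er Ir] := EI_ge0 _ r0.
  have h1 : (u r).1 * Sc (x r) <= bnom * sig by apply: ler_pM => //; Lra.
  have h2 : (u r).1 * Sc (x r) * Ic (x r) <= bnom * sig * Ic (x r) by apply: ler_wpM2r.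
  have h3 : a * gnom * Ic (x r) <= a * (u r).2 * Ic (x r).
    by apply: ler_wpM2r => //; apply: ler_wpM2l => //; Lra.
  have h4 : (1 - a) * m * Ec (x r) <= (1 - a) * eta * Ec (x r).
    by apply: ler_wpM2r => //; apply: ler_wpM2l => //; Lra.
  have h5 : (1 - a) * m * (a * Ic (x r)) <= (1 - a) * gnom * Ic (x r).
    rewrite mulrA; apply: ler_wpM2r => //.
    rewrite -mulrA; apply: ler_wpM2l; first by Lra.
    by rewrite -[gnom]mulr1; apply: ler_pM => //; Lra.
  have h6 : bnom * sig * Ic (x r) = (2 * a - 1) * gnom * Ic (x r).
    have ra : rho = 2 * a - 1 by Lra.
    by rewrite -rg ra.
  rewrite /gV /V /l0 /fE /fI.
  Lra.
have dV : forall s t, tau <= s -> s <= t -> V t - V s = J gV s t.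
  move=> s t ts st; have s0 : 0 <= s by Lra.
  rewrite /V /gV -J_lin; [|exact: jE|exact: jI].
  rewrite -(dE _ _ s0 st) -(dI _ _ s0 st); ring.
have jV : forall s t, tau <= s -> s <= t ->
    (@lebesgue_measure R).-integrable `]s, t] (EFin \o gV).
  move=> s t ts st; have s0 : 0 <= s by Lra.
  exact: (int_lin _ s t gE gI a (jE _ _ s0 st) (jI _ _ s0 st)).
have V0 : forall r, 0 <= r -> 0 <= V r.
  move=> r r0; have [Er Ir] := EI_ge0 _ r0; rewrite /V addr_ge0 // mulr_ge0 //; Lra.
have V1 : forall r, 0 <= r -> V r <= 1.
  move=> r r0; have [Er Ir] := EI_ge0 _ r0; have := N_dec _ r0.
  have := S_ge0 _ r0; case: (Pi_t _ r0) => _ _ _ n1.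
  have : a * Ic (x r) <= Ic (x r) by rewrite -[X in _ <= X]mul1r ler_wpM2r.
  rewrite /V; Lra.
have Vmono : forall s t, tau <= s -> s <= t -> V t <= V s.
  move=> s t ts st.
  have := J_ub gV s t 0 st (jV s t ts st).
  rewrite -(dV s t ts st) mul0r => h.
  suff : V t - V s <= 0 by Lra.
  apply: h => r /andP[sr rt].
  have tr : tau <= r by Lra.
  have := P r tr; have := V0 r (le_trans tau0 tr).
  have := mulr_ge0 (ltW l00) (V0 r (le_trans tau0 tr)).
  rewrite mulNr; Lra.
have Vstep : forall t, tau <= t -> (1 + l0) * V (t + 1) <= V t.
  move=> t tt; have st : t <= t + 1 by Lra.
  have := J_ub gV t (t + 1) (- l0 * V (t + 1)) st (jV t (t + 1) tt st).
  rewrite -(dV t (t + 1) tt st) => h.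
  have e1 : t + 1 - t = 1 by ring.
  suff : V (t + 1) - V t <= - l0 * V (t + 1) * (t + 1 - t) by rewrite e1 mulr1; Lra.
  apply: h => r /andP[tr rt].
  have tr' : tau <= r by Lra.
  apply: (le_trans (P r tr')).
  rewrite !mulNr lerN2; apply: ler_wpM2l; first exact: ltW.
  exact: Vmono.
pose q := (1 + l0)^-1.
have q0 : 0 <= q by rewrite /q invr_ge0; Lra.
have qq : q * (1 + l0) = 1 by rewrite /q mulVf //; apply: lt0r_neq0; Lra.
have Vk : forall k : nat, forall t, tau + k%:R <= t -> V t <= q ^+ k.
  elim=> [|k IH] t ht.
    by rewrite expr0; apply: V1; move: ht; rewrite addr0; Lra.
  have h1 : tau + k%:R <= t - 1 by move: ht; rewrite -natr1; Lra.
  have := IH _ h1.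
  have h2 : tau <= t - 1 by have := ler0n R k; Lra.
  have := Vstep (t - 1) h2.
  rewrite subrK exprSr => hs1 hk.
  have : V t = q * ((1 + l0) * V t) by rewrite mulrA qq mul1r.
  move=> ->; rewrite mulrC; apply: ler_pM => //.
    by rewrite mulr_ge0 // ?V0 //; Lra.
  exact: le_trans hs1 hk.
pose lam := l0 / (1 + l0).
have lq : lam = 1 - q.
  rewrite /lam /q; apply: (mulIf (x := 1 + l0)); first by apply: lt0r_neq0; Lra.
  by rewrite mulrBl divfK ?mulVf ?mul1r //; try (apply: lt0r_neq0; Lra); ring.
have lam0 : 0 < lam by rewrite /lam divr_gt0 //; Lra.
have eq_ : q <= expR (- lam) by have := expR_ge1Dx (- lam); Lra.
exists (expR (lam * (tau + 1)) / a), lam; split.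
  by rewrite divr_ge0 // ?ltW // expR_gt0.
split => // t t0.
have [Er Ir] := EI_ge0 _ t0.
have EV : Ec (x t) + Ic (x t) <= V t / a.
  rewrite ler_pdivlMr // /V.
  have : a * Ic (x t) <= Ic (x t) by rewrite -[X in _ <= X]mul1r ler_wpM2r.
  have : a * Ec (x t) <= Ec (x t) by rewrite -[X in _ <= X]mul1r ler_wpM2r.
  Lra.
have [k [hk1 hk2]] : exists k : nat, V t <= q ^+ k /\ t - tau - 1 <= k%:R.
  have [tt|tt] := leP tau t.
    exists (Num.truncn (t - tau)).
    have := truncn_itv (x := t - tau) ltac:(Lra).
    case/andP=> k1 k2; split; last by move: k2; rewrite -natr1; Lra.
    by apply: Vk; Lra.
  by exists 0%N; rewrite expr0 V1 //; split => //; Lra.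
have HV : V t <= expR (lam * (tau + 1)) * expR (- (lam * t)).
  rewrite -expRD; apply: (le_trans hk1); apply: (le_trans (powle _ _ k q0 eq_)).
  rewrite -expRM_natl ler_expR.
  have : lam * (t - tau - 1) <= lam * k%:R by rewrite ler_wpM2l // ltW.
  Lra.
apply: (le_trans EV).
rewrite mulrAC; apply: ler_wpM2r => //; by rewrite invr_ge0 ltW.
Qed.


Lemma GPi_all (hX : Xf eta bnom gnom Imax x0) t : 0 <= t -> GPi Imax (x t).
Proof using heta hbmin hb hgnom hg hI0 hI1 hu hx hx0.
move=> t0; split; first exact: Pi_t.
case: hX => [[_ [hS [hI hE]]]|[_ [hE hI]]].
- by case: (box hS hI hE _ t0).
- by have [_ ->] := dfe hE hI _ t0; apply: ltW.
Qed.

Lemma decay_all (hX : Xf eta bnom gnom Imax x0) : exists c lam : R, 0 <= c /\ 0 < lam /\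
  forall t, 0 <= t -> Ec (x t) + Ic (x t) <= c * expR (- (lam * t)).
Proof using heta hbmin hb hgnom hg hI0 hI1 hu hx hx0.
case: hX => [[_ [hS _]]|[_ [hE hI]]]; last first.
  exists 0, 1; split => //; split => // t t0.
  by have [-> ->] := dfe hE hI _ t0; rewrite mul0r addr0.
have [[tau [tau0 htau]]|hn] := pselect (exists tau, 0 <= tau /\ Sc (x tau) < gnom / bnom).
  exact: (decayA _ tau0 htau).
have hB : forall tau, 0 <= tau -> gnom / bnom <= Sc (x tau).
  move=> tau tau0; rewrite leNgt; apply/negP => h; apply: hn; exists tau; split => //.
have hIz := I_zero hS hB.
exists 0, 1; split => //; split => // t t0.
by rewrite (hIz t t0) (E_zero hIz t t0) addr0 mul0r.
Qed.

End Main.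

Lemma Xf_Pi {R : realType} {eta bnom gnom Imax : R} {x0 : R * R * R} :
  Xf eta bnom gnom Imax x0 -> Pi x0.
Proof.
case=> [[? _]|[/andP[s0 s1] [e i]]] //.
rewrite /Pi e i addr0 addr0 s0 s1 lexx ler01; split => //.
Qed.

Theorem lemma2 (R : realType) (eta bmin bnom gnom gmax Imax : R)
  (heta : 0 < eta) (hbmin : 0 < bmin) (hb : bmin <= bnom)
  (hgnom : 0 < gnom) (hg : gnom <= gmax)
  (hI0 : 0 < Imax) (hI1 : Imax < 1) :
  (forall x0, Xf eta bnom gnom Imax x0 -> MRPI eta bmin bnom gnom gmax Imax x0) /\
  (forall x0, Xf eta bnom gnom Imax x0 ->
   forall u, admissible bmin bnom gnom gmax u ->
   forall x, is_solution eta u x0 x ->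
   exists c lam : R, 0 <= c /\ 0 < lam /\
     forall t, 0 <= t -> Ec (x t) + Ic (x t) <= c * expR (- (lam * t))).
Proof.
split.
- move=> x0 hX; have P0 := Xf_Pi hX.
  split.
    split => //.
    case: hX => [[_ [_ [hI _]]]|[_ [_ ->]]] //; exact: ltW.
  move=> u hu x hx t t0.
  exact: (@GPi_all R eta bmin bnom gnom gmax Imax heta hbmin hb hgnom hg hI0 hI1 u x0 x hu hx P0 hX t t0).
- move=> x0 hX u hu x hx.
  have P0 := Xf_Pi hX.
  exact: (@decay_all R eta bmin bnom gnom gmax Imax heta hbmin hb hgnom hg hI0 hI1 u x0 x hu hx P0 hX).
Qed.
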